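(* Let $R$ be a subring of $\mathbb{C}$ with field of fractions $K\subseteq\mathbb{C}$, suppose the transcendence degree of $K$ over $\mathbb{Q}$ is $k<\infty$, and let $t_1,\dots,t_k\in R$ be algebraically independent over $\mathbb{Q}$. Let $f\colon R\to\mathbb{C}$ be additive and such that $q=f/j$ (i.e. $x\mapsto f(x)/x$), as a map from the semigroup $R^*$ to $\mathbb{C}$, is a generalized polynomial. If $f=0$ on the multiplicative semigroup $G$ generated by $t_1,\dots,t_k$, then $f=0$ on $R$.
   Context: Subrings contain $1$; the multiplicative semigroup generated by $t_1,\dots,t_k$ consists of all monomials $t_1^{i_1}\cdots t_k^{i_k}$ with $i_1,\dots,i_k\ge 0$ (including $1$). $R^*$ is the semigroup $R\setminus\{0\}$ under multiplication. For $f$ on an abelian semigroup $G$, $\Delta_g f(x)=f(x\cdot g)-f(x)$; $f$ is a generalized polynomial if for some $m$, $\Delta_{g_1}\cdots\Delta_{g_{m+1}}f=0$ for all $g_1,\dots,g_{m+1}$ in the semigroup. *)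

(* Defs.v *)
From mathcomp Require Import all_boot all_algebra.
From mathcomp Require Import reals.
From mathcomp.real_closed Require Import complex.
From mathcomp Require Import mpoly.
Set Implicit Arguments. Unset Strict Implicit. Unset Printing Implicit Defensive.
Import GRing.Theory.
Local Open Scope ring_scope.

Section Defs.
Variable R : realType.
Local Notation C := (R[i]).

Definition is_subring (S : C -> Prop) : Prop :=
  S 1 /\ (forall x y, S x -> S y -> S (x - y)) /\ (forall x y, S x -> S y -> S (x * y)).

Definition frac_field (S : C -> Prop) : C -> Prop :=
  fun z => exists a b, S a /\ S b /\ b != 0 /\ z = a / b.

Definition qeval (k : nat) (t : 'I_k -> C) (p : {mpoly rat[k]}) : C := mmap ratr t p.

Definition alg_indep (k : nat) (t : 'I_k -> C) : Prop :=
  forall p : {mpoly rat[k]}, qeval t p = 0 -> p = 0.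

Definition Qfield (k : nat) (t : 'I_k -> C) : C -> Prop :=
  fun z => exists p q : {mpoly rat[k]}, qeval t q != 0 /\ z = qeval t p / qeval t q.

Definition algebraic_over (k : nat) (t : 'I_k -> C) (x : C) : Prop :=
  exists P : {poly C}, P != 0 /\ (forall i, Qfield t P`_i) /\ root P x.

Definition trans_basis (K : C -> Prop) (k : nat) (t : 'I_k -> C) : Prop :=
  (forall i, K (t i)) /\ alg_indep t /\ (forall x, K x -> algebraic_over t x).

Definition trdeg_eq (K : C -> Prop) (k : nat) : Prop :=
  exists t : 'I_k -> C, trans_basis K t.

(* Delta_{g_1} ... Delta_{g_n} h, with Delta_g h (x) = h (x g) - h x *)
Definition mdiff (gs : seq C) (h : C -> C) : C -> C :=
  foldr (fun g h' => fun x => h' (x * g) - h' x) h gs.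

(* h : S^* -> C is a generalized polynomial on the semigroup S^* = S \ {0} *)
Definition gen_poly_on_units (S : C -> Prop) (h : C -> C) : Prop :=
  exists m : nat, forall gs : seq C, size gs = m.+1 ->
    (forall g, g \in gs -> S g /\ g != 0) ->
    forall x, S x -> x != 0 -> mdiff gs h x = 0.

End Defs.

(* Main.v *)
Require Import Defs.
From mathcomp Require Import all_boot all_algebra.
From mathcomp Require Import reals.
From mathcomp.real_closed Require Import complex.
From mathcomp Require Import mpoly.
From mathcomp Require Import ring zify.
Set Implicit Arguments. Unset Strict Implicit. Unset Printing Implicit Defensive.
Import GRing.Theory Num.Theory.
Local Open Scope ring_scope.

Section PartA.
Variable R : realType.
Local Notation C := (R[i]).
Variable S : C -> Prop.
Hypothesis hS : is_subring S.

Lemma S1 : S 1. Proof. by case: hS. Qed.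
Lemma SB x y : S x -> S y -> S (x - y). Proof. by case: hS => _ [+ _]; apply. Qed.
Lemma SM x y : S x -> S y -> S (x * y). Proof. by case: hS => _ [_]; apply. Qed.
Lemma S0 : S 0. Proof. by rewrite -(subrr 1); apply: SB; apply: S1. Qed.
Lemma SN x : S x -> S (- x). Proof. by move=> Sx; rewrite -sub0r; apply: SB => //; apply: S0. Qed.
Lemma SD x y : S x -> S y -> S (x + y).
Proof. by move=> Sx Sy; rewrite -[y]opprK; apply: SB => //; apply: SN. Qed.
Lemma SMn x n : S x -> S (x *+ n).
Proof. by move=> Sx; elim: n => [|n IH]; [rewrite mulr0n; exact: S0 | rewrite mulrS; exact: SD]. Qed.
Lemma SMz x (z : int) : S x -> S (x *~ z).
Proof. by move=> Sx; case: z => n; rewrite ?NegzE ?mulrNz; [apply: SMn | apply: SN; apply: SMn]. Qed.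
Lemma SX x n : S x -> S (x ^+ n).
Proof. by move=> Sx; elim: n => [|n IH]; [rewrite expr0; exact: S1 | rewrite exprS; exact: SM]. Qed.
Lemma Ssum (I : eqType) (s : seq I) (F : I -> C) :
  (forall i, i \in s -> S (F i)) -> S (\sum_(i <- s) F i).
Proof.
elim: s => [|a s IH] H; first by rewrite big_nil; exact: S0.
rewrite big_cons; apply: SD; first by apply: H; rewrite mem_head.
by apply: IH => i si; apply: H; rewrite inE si orbT.
Qed.
Lemma Sprod (I : Type) (s : seq I) (F : I -> C) :
  (forall i, S (F i)) -> S (\prod_(i <- s) F i).
Proof. by move=> H; elim: s => [|a s IH]; [rewrite big_nil; exact: S1 | rewrite big_cons; exact: SM]. Qed.

Definition fadd (f : C -> C) := forall x y, S x -> S y -> f (x + y) = f x + f y.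

Section Fadd.
Variable f : C -> C.
Hypothesis hf : fadd f.
Lemma f0 : f 0 = 0.
Proof.
have H := hf S0 S0; rewrite addr0 in H.
by apply: (addrI (f 0)); rewrite addr0 -H.
Qed.
Lemma fN x : S x -> f (- x) = - f x.
Proof.
move=> Sx; apply/eqP; rewrite -subr_eq0 opprK -(hf (SN Sx) Sx) addNr f0 //=.
Qed.
Lemma fMn x n : S x -> f (x *+ n) = f x *+ n.
Proof. by move=> Sx; elim: n => [|n IH]; [by rewrite !mulr0n f0 | by rewrite !mulrS (hf Sx (SMn _ Sx)) IH]. Qed.
Lemma fMz x (z : int) : S x -> f (x *~ z) = f x *~ z.
Proof.
move=> Sx; case: z => n; first exact: fMn.
by rewrite NegzE !mulrNz fN; [rewrite fMn | exact: SMn].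
Qed.
Lemma fsum (I : eqType) (s : seq I) (F : I -> C) :
  (forall i, i \in s -> S (F i)) -> f (\sum_(i <- s) F i) = \sum_(i <- s) f (F i).
Proof.
elim: s => [|a s IH] H; first by rewrite !big_nil f0.
have H' : forall i, i \in s -> S (F i) by move=> i si; apply: H; rewrite inE si orbT.
by rewrite !big_cons (hf (H a (mem_head _ _)) (Ssum H')) IH.
Qed.
End Fadd.

Implicit Types (g x c d : C) (gs : seq C) (h : C -> C).
Lemma mdiff_cons g gs h x : mdiff (g :: gs) h x = mdiff gs h (x * g) - mdiff gs h x.
Proof. by []. Qed.
Lemma mdiff_rcons gs g h : mdiff (rcons gs g) h = mdiff gs (fun x => h (x * g) - h x).
Proof. by rewrite /mdiff foldr_rcons. Qed.
Lemma mdiff_scale gs c h x : mdiff gs (fun y => c * h y) x = c * mdiff gs h x.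
Proof.
elim: gs x => [|g gs IH] x //=.
by rewrite IH IH mulrBr.
Qed.
Lemma mdiff_shift gs d h x : gs != [::] -> mdiff gs (fun y => h y + d) x = mdiff gs h x.
Proof.
have H : forall y, mdiff gs (fun y => h y + d) y = mdiff gs h y + (if gs is [::] then d else 0).
  elim: gs => [|g gs IH] y //=.
  rewrite !IH; case: gs {IH} => [|a l]; rewrite ?addr0 //.
  by rewrite opprD addrACA subrr addr0.
by move=> ne; rewrite H; case: gs ne H => // a l _ _; rewrite addr0.
Qed.
Lemma mdiff_congr gs h1 h2 :
  (forall y, S y -> y != 0 -> h1 y = h2 y) ->
  (forall g, g \in gs -> S g /\ g != 0) ->
  forall x, S x -> x != 0 -> mdiff gs h1 x = mdiff gs h2 x.
Proof.
move=> H; elim: gs => [|g gs IH] Hg x Sx x0 /=; first exact: H.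
have Hg' : forall g', g' \in gs -> S g' /\ g' != 0 by move=> g' gi; apply: Hg; rewrite inE gi orbT.
have [Sg g0] := Hg g (mem_head _ _).
have Sxg : S (x * g) by exact: SM.
have xg0 : x * g != 0 by rewrite mulf_neq0.
by rewrite (IH Hg' (x * g) Sxg xg0) (IH Hg' x Sx x0).
Qed.

Definition derivS (f : C -> C) := forall x y, S x -> S y -> f (y * x) = x * f y + f x * y.

Variable G : C -> Prop.
Hypothesis G1 : G 1.
Hypothesis GM : forall x y, G x -> G y -> G (x * y).
Hypothesis GS : forall x, G x -> S x.
Hypothesis G0 : forall x, G x -> x != 0.

Definition genpoly m (f : C -> C) :=
  forall gs : seq C, size gs = m.+1 ->
    (forall g, g \in gs -> S g /\ g != 0) ->
    forall x, S x -> x != 0 -> mdiff gs (fun x => f x / x) x = 0.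

Hypothesis HB : forall f, fadd f -> derivS f -> (forall g, G g -> f g = 0) ->
  forall x, S x -> f x = 0.

Lemma partA m : forall f, fadd f -> genpoly m f -> (forall g, G g -> f g = 0) ->
  forall x, S x -> f x = 0.
Proof.
elim: m => [|m IH] f hf hg hG x Sx.
  have [->|x0] := eqVneq x 0; first exact: f0.
  have := hg [:: x] erefl.
  have H : forall g, g \in [:: x] -> S g /\ g != 0 by move=> g; rewrite inE => /eqP ->.
  move=> /(_ H 1 S1 (oner_neq0 _)) /=; rewrite !mul1r (hG 1 G1) mul0r subr0 => /eqP.
  by rewrite mulf_eq0 invr_eq0 (negbTE x0) orbF => /eqP.
have step1 : forall g, G g -> forall y, S y -> f (y * g) = g * f y.
  move=> g Gg; have Sg := GS Gg; have g0 := G0 Gg.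
  suff : forall y, S y -> f (y * g) - g * f y = 0.
    by move=> H y Sy; apply/eqP; rewrite -subr_eq0 H.
  apply: (IH (fun y => f (y * g) - g * f y)).
  - move=> a b Sa Sb /=.
    by rewrite mulrDl (hf _ _ (SM Sa Sg) (SM Sb Sg)) (hf _ _ Sa Sb) mulrDr opprD addrACA.
  - move=> gs sz Hgs y Sy y0.
    rewrite (@mdiff_congr gs _ (fun y => g * (f (y * g) / (y * g) - f y / y))) //.
      rewrite mdiff_scale -mdiff_rcons hg ?mulr0 // ?size_rcons ?sz //.
      by move=> a; rewrite mem_rcons inE => /orP [/eqP ->|/Hgs].
    move=> z Sz z0 /=; field.
    by rewrite z0 g0.
  - by move=> a Ga /=; rewrite !hG ?mulr0 ?subr0 //; apply: GM.
have der : derivS f.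
  move=> a y Sa Sy.
  have [->|a0] := eqVneq a 0; first by rewrite mulr0 f0 // mul0r mul0r addr0.
  suff : forall y, S y -> f (y * a) - a * f y - f a * y = 0.
    by move=> H; apply/eqP; rewrite -subr_eq0 opprD addrA H.
  apply: (IH (fun y => f (y * a) - a * f y - f a * y)).
  - move=> u v Su Sv /=.
    rewrite mulrDl (hf _ _ (SM Su Sa) (SM Sv Sa)) (hf _ _ Su Sv) mulrDr mulrDr.
    ring.
  - move=> gs sz Hgs z Sz z0.
    rewrite (@mdiff_congr gs _ (fun y => a * (f (y * a) / (y * a) - f y / y) + - f a)) //.
      rewrite mdiff_shift -?size_eq0 ?sz //.
      rewrite mdiff_scale -mdiff_rcons hg ?mulr0 // ?size_rcons ?sz //.
      by move=> b; rewrite mem_rcons inE => /orP [/eqP ->|/Hgs].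
    move=> w Sw w0 /=; field.
    by rewrite w0 a0.
  - move=> b Gb /=.
    by rewrite [b * a]mulrC (step1 b Gb a Sa) (hG b Gb) mulr0 subr0 [f a * b]mulrC subrr.
exact: HB.
Qed.


Section PartB.
Variable f : C -> C.
Hypothesis hf : fadd f.
Hypothesis der : derivS f.
Definition Wk z := S z /\ f z = 0.

Lemma B1 x : S x -> forall p : {poly C}, (forall i, Wk p`_i) ->
  S p.[x] /\ f p.[x] = p^`().[x] * f x.
Proof.
move=> Sx; elim/poly_ind => [|p c IH] H.
  by rewrite horner0 deriv0 horner0 mul0r f0 //; split => //; exact: S0.
have Hp : forall i, Wk p`_i.
  by move=> i; have := H i.+1; rewrite coefD coefMX coefC /= addr0.
have Hc : Wk c by have := H 0%N; rewrite coefD coefMX coefC /= add0r.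
have [Sp fp] := IH Hp; case: Hc => Sc fc.
rewrite hornerMXaddC derivMXaddC hornerD hornerMX; split.
  by apply: SD => //; apply: SM.
rewrite (hf (SM Sp Sx) Sc) fc addr0 (der Sx Sp) fp; ring.
Qed.

Lemma B2 x : S x -> f x != 0 -> forall n (p : {poly C}), (size p <= n)%N -> p != 0 ->
  (forall i, Wk p`_i) -> root p x -> False.
Proof.
move=> Sx fx0; elim=> [|n IH] p sz p0 Hp rt.
  by move: p0; rewrite -size_poly_eq0; case: (size p) sz.
have [le1|gt1] := leqP (size p) 1.
  move: rt p0; rewrite (size1_polyC le1) /root hornerC => /eqP ->.
  by rewrite eqxx.
have Hd : forall i, Wk (p^`())`_i.
  move=> i; rewrite coef_deriv; case: (Hp i.+1) => S1' f1; split; first exact: SMn.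
  by rewrite fMn // f1 mul0rn.
have d0 : p^`() != 0.
  apply/eqP => H; have := congr1 (fun q : {poly C} => q`_(size p).-2) H.
  rewrite /= coef_deriv coef0.
  have -> : ((size p).-2.+1 = (size p).-1)%N by case: (size p) gt1 => [|[|m]].
  move/eqP; rewrite mulrn_eq0 /= -lead_coefE lead_coef_eq0 (negbTE p0) orbF.
  by case: (size p) gt1 => [|[|m]].
apply: (IH (p^`())) => //.
  by rewrite -ltnS (leq_trans (lt_size_deriv p0)).
have [_ fp] := B1 Sx Hp.
move: rt; rewrite /root => /eqP rt; rewrite rt f0 // in fp.
by move/eqP: fp; rewrite eq_sym mulf_eq0 (negbTE fx0) orbF.
Qed.

End PartB.

Definition Zspan (G : C -> Prop) z := exists s : seq (int * C),
  (forall q, q \in s -> G q.2) /\ z = \sum_(q <- s) q.2 *~ q.1.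

Lemma partB f : fadd f -> derivS f -> (forall g, G g -> f g = 0) ->
  (forall x, S x -> exists p : {poly C}, p != 0 /\ (forall i, Zspan G p`_i) /\ root p x) ->
  forall x, S x -> f x = 0.
Proof.
move=> hf der hG Hex x Sx; apply/eqP; apply/negPn/negP => fx0.
have [p [p0 [Hp rt]]] := Hex x Sx.
apply: (B2 hf der Sx fx0 (leqnn _) p0 _ rt) => i.
have [s [Hs ->]] := Hp i; split.
  by apply: Ssum => q qs; apply: SMz; apply: GS; apply: Hs.
rewrite (fsum hf) => [|q qs]; last by apply: SMz; apply: GS; apply: Hs.
rewrite big_seq big1 // => q qs; rewrite fMz //; last by apply: GS; apply: Hs.
by rewrite hG ?mul0rz //; apply: Hs.
Qed.

End PartA.

Section Span.
Variable R : realType.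
Local Notation C := (R[i]).
Implicit Types (M : C -> Prop) (z g : C).

Definition span M z := exists s : seq (rat * C),
  (forall q, q \in s -> M q.2) /\ z = \sum_(q <- s) ratr q.1 * q.2.

Lemma span_gen M g : M g -> span M g.
Proof.
move=> Mg; exists [:: (1, g)]; split; last by rewrite big_seq1 rmorph1 mul1r.
by move=> q; rewrite inE => /eqP ->.
Qed.

Lemma span0 M : span M 0.
Proof. by exists [::]; split => //; rewrite big_nil. Qed.

Lemma spanD M z1 z2 : span M z1 -> span M z2 -> span M (z1 + z2).
Proof.
move=> [s1 [H1 ->]] [s2 [H2 ->]]; exists (s1 ++ s2); split; last by rewrite big_cat.
by move=> q; rewrite mem_cat => /orP [/H1|/H2].
Qed.

Lemma spanZ M c z : span M z -> span M (ratr c * z).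
Proof.
move=> [s [H ->]]; exists [seq (c * q.1, q.2) | q <- s]; split.
  by move=> q /mapP [q' /H Hq' ->].
by rewrite big_map mulr_sumr; apply: eq_bigr => q _; rewrite rmorphM mulrA.
Qed.

Lemma spanN M z : span M z -> span M (- z).
Proof. by move=> H; rewrite -mulN1r -(rmorphN1 (ratr : rat -> C)); apply: spanZ. Qed.

Lemma span_sum M (I : eqType) (r : seq I) (F : I -> C) :
  (forall i, i \in r -> span M (F i)) -> span M (\sum_(i <- r) F i).
Proof.
elim: r => [|a r IH] H; first by rewrite big_nil; apply: span0.
rewrite big_cons; apply: spanD; first by apply: H; rewrite mem_head.
by apply: IH => i ir; apply: H; rewrite inE ir orbT.
Qed.

Lemma span_sub M1 M2 z : (forall g, M1 g -> span M2 g) -> span M1 z -> span M2 z.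
Proof.
move=> H [s [Hs ->]]; apply: span_sum => q qs; apply: spanZ; apply: H; exact: Hs.
Qed.

Lemma span_mul M1 M2 M3 z1 z2 : span M1 z1 -> span M2 z2 ->
  (forall g1 g2, M1 g1 -> M2 g2 -> span M3 (g1 * g2)) -> span M3 (z1 * z2).
Proof.
move=> [s1 [H1 ->]] [s2 [H2 ->]] H; rewrite mulr_suml; apply: span_sum => q1 q1s.
rewrite mulr_sumr; apply: span_sum => q2 q2s.
have -> : ratr q1.1 * q1.2 * (ratr q2.1 * q2.2) = ratr (q1.1 * q2.1) * (q1.2 * q2.2) :> C.
  by rewrite rmorphM; ring.
by apply: spanZ; apply: H; [apply: H1 | apply: H2].
Qed.

Lemma span_fin (J : finType) (w : J -> C) M z :
  (forall g, M g -> exists j, g = w j) -> span M z ->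
  exists lam : J -> rat, z = \sum_j ratr (lam j) * w j.
Proof.
move=> Hw [s [Hs ->]]; elim: s Hs => [|q s IH] Hs.
  by exists (fun _ => 0); rewrite big_nil big1 // => j _; rewrite rmorph0 mul0r.
have [lam Hl] : exists lam : J -> rat, \sum_(q <- s) ratr q.1 * q.2 = \sum_j ratr (lam j) * w j.
  by apply: IH => q' q's; apply: Hs; rewrite inE q's orbT.
have [j0 Hj0] := Hw _ (Hs q (mem_head _ _)).
exists (fun j => lam j + (if j == j0 then q.1 else 0)).
rewrite big_cons Hl addrC.
under [RHS]eq_bigr do rewrite rmorphD mulrDl.
rewrite big_split /=; congr (_ + _).
rewrite (bigD1 j0) //= eqxx big1 ?addr0 -?Hj0 // => j /negbTE ->.
by rewrite rmorph0 mul0r.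
Qed.

End Span.

Section LinAlg.
Variable R : realType.
Local Notation C := (R[i]).

Lemma LA (I J : finType) (v : I -> C) (w : J -> C) (lam : I -> J -> rat) :
  (forall i, v i = \sum_j ratr (lam i j) * w j) -> (#|J| < #|I|)%N ->
  exists mu : I -> rat, (exists i, mu i != 0) /\ \sum_i ratr (mu i) * v i = 0.
Proof.
move=> Hv ltJI.
pose M : 'M[rat]_(#|I|, #|J|) := \matrix_(r, s) lam (enum_val r) (enum_val s).
have rk : kermx M != 0.
  rewrite -mxrank_eq0 mxrank_ker subn_eq0 -ltnNge.
  exact: leq_ltn_trans (rank_leq_col M) ltJI.
have [r0 Hr0] : exists r0, row r0 (kermx M) != 0.
  case: (pickP (fun r => row r (kermx M) != 0)) => [r0 H|H]; first by exists r0.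
  suff K0 : kermx M = 0 by move: rk; rewrite K0 eqxx.
  by apply/row_matrixP => r; rewrite row0; move: (H r) => /= /negbFE /eqP.
set mu' := row r0 (kermx M).
have muM : mu' *m M = 0 by rewrite /mu' -row_mul mulmx_ker row0.
have [s0 Hs0] : exists s0, mu' 0 s0 != 0.
  case: (pickP (fun s => mu' 0 s != 0)) => [s0 H|H]; first by exists s0.
  suff K0 : mu' = 0 by move: Hr0; rewrite -/mu' K0 eqxx.
  by apply/matrixP => a b; rewrite ord1; move: (H b) => /= /negbFE /eqP ->; rewrite mxE.
exists (fun i => mu' 0 (enum_rank i)); split.
  by exists (enum_val s0); rewrite enum_valK.
under eq_bigr do rewrite Hv mulr_sumr.
rewrite exchange_big /= big1 // => j _.
under eq_bigr do rewrite mulrA.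
rewrite -mulr_suml.
have -> : \sum_i ratr (mu' 0 (enum_rank i)) * ratr (lam i j) =
    ratr ((mu' *m M) 0 (enum_rank j)) :> C.
  rewrite mxE rmorph_sum (reindex (fun r : 'I_#|I| => enum_val r)) /=;
    last by apply: onW_bij; exact: enum_val_bij.
  apply: eq_bigr => r _; rewrite enum_valK rmorphM; congr (_ * _).
  by rewrite /M mxE enum_rankK.
by rewrite muM mxE rmorph0 mul0r.
Qed.

Lemma den_common (s : seq rat) : exists D : int, D != 0 /\
  forall q, q \in s -> exists z : int, q * D%:~R = z%:~R.
Proof.
elim: s => [|q0 s [D [D0 HD]]]; first by exists 1.
exists (D * denq q0); split; first by rewrite mulf_neq0 ?denq_neq0.
move=> q; rewrite inE => /orP [/eqP ->|qs].
  exists (numq q0 * D); rewrite !intrM numqE; ring.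
have [z Hz] := HD q qs; exists (z * denq q0).
by rewrite !intrM mulrA Hz.
Qed.

Lemma int_scale (I : finType) (u : I -> C) (mu : I -> rat) :
  (exists i, mu i != 0) -> \sum_i ratr (mu i) * u i = 0 ->
  exists z : I -> int, (exists i, z i != 0) /\ \sum_i u i *~ z i = 0.
Proof.
move=> [i0 Hi0] Hsum.
have [D [D0 HD]] := den_common [seq mu i | i <- enum I].
have : forall i, exists z : int, mu i * D%:~R = z%:~R.
  by move=> i; apply: HD; apply: map_f; rewrite mem_enum.
move=> /fin_all_exists [z Hz]; exists z; split.
  exists i0; apply/eqP => zi0; move: (Hz i0); rewrite zi0 mulr0z => /eqP.
  by rewrite mulf_eq0 (negbTE Hi0) intr_eq0 (negbTE D0).
have -> : \sum_i u i *~ z i = (D%:~R : C) * \sum_i ratr (mu i) * u i.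
  rewrite mulr_sumr; apply: eq_bigr => i _.
  rewrite -mulrzl.
  have -> : (z i)%:~R = ratr ((z i)%:~R) :> C by rewrite rmorph_int.
  by rewrite -Hz rmorphM rmorph_int; ring.
by rewrite Hsum mulr0.
Qed.

End LinAlg.
Section Mono.
Variable R : realType.
Local Notation C := (R[i]).
Variable k : nat.
Variable tp : 'I_k -> C.
Variable Y : finType.
Variable ys : Y -> C.

Definition Mono (e : 'I_k -> nat) (b : Y -> nat) : C :=
  (\prod_j tp j ^+ e j) * \prod_o ys o ^+ b o.

Definition Gen (A : nat) (Bf : Y -> nat) (g : C) :=
  exists e b, (forall j, e j <= A)%N /\ (forall o, b o <= Bf o)%N /\ g = Mono e b.

Definition SG A Bf := span (Gen A Bf).

Definition zf : Y -> nat := fun _ => 0%N.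

Lemma MonoM e b e' b' : Mono e b * Mono e' b' = Mono (fun j => e j + e' j)%N (fun o => b o + b' o)%N.
Proof.
rewrite /Mono mulrACA; congr (_ * _); rewrite -big_split /=; apply: eq_bigr => i _; by rewrite exprD.
Qed.

Lemma SG_mul A Bf A' Bf' z z' : SG A Bf z -> SG A' Bf' z' ->
  SG (A + A') (fun o => Bf o + Bf' o)%N (z * z').
Proof.
move=> H H'; apply: (span_mul H H') => g g' [e [b [he [hb ->]]]] [e' [b' [he' [hb' ->]]]].
rewrite MonoM; apply: span_gen; do 2 eexists; split; last split; last reflexivity.
  by move=> j; apply: leq_add.
by move=> o; apply: leq_add.
Qed.

Lemma SG_mono A Bf A' Bf' z : (A <= A')%N -> (forall o, Bf o <= Bf' o)%N ->
  SG A Bf z -> SG A' Bf' z.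
Proof.
move=> hA hB; apply: span_sub => g [e [b [he [hb ->]]]]; apply: span_gen.
do 2 eexists; split; last split; last reflexivity.
  by move=> j; apply: leq_trans (he j) hA.
by move=> o; apply: leq_trans (hb o) (hB o).
Qed.

Lemma Mono0 : Mono (fun _ => 0%N) zf = 1.
Proof. by rewrite /Mono !big1 ?mulr1 // => i _; rewrite expr0. Qed.

Lemma SG_one A Bf : SG A Bf 1.
Proof.
apply: span_gen; exists (fun _ => 0%N), zf; split => //; split => //.
by rewrite Mono0.
Qed.

Lemma SG_X A c n : SG A zf c -> SG (A * n) zf (c ^+ n).
Proof.
move=> Hc; elim: n => [|n IH]; first by rewrite expr0; apply: SG_one.
rewrite exprS; apply: SG_mono (SG_mul Hc IH) => //; by rewrite mulnS.
Qed.

Definition delta (o : Y) (l : nat) : Y -> nat := fun o' => if o' == o then l else 0%N.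

Lemma Mono_delta e o l : Mono e (delta o l) = (\prod_j tp j ^+ e j) * ys o ^+ l.
Proof.
rewrite /Mono (bigD1 o) //= /delta eqxx.
rewrite [X in _ * (_ * X)]big1 ?mulr1 // => o' /negbTE ->.
by rewrite expr0.
Qed.

Lemma SG_y A Bf o l : (l <= Bf o)%N -> SG A Bf (ys o ^+ l).
Proof.
move=> hl; apply: span_gen; exists (fun _ => 0%N), (delta o l); split => //; split.
  by move=> o'; rewrite /delta; case: eqP => [->|].
by rewrite Mono_delta big1 ?mul1r // => j _; rewrite expr0.
Qed.

Lemma SG_T A Bf e : (forall j, e j <= A)%N -> SG A Bf (\prod_j tp j ^+ e j).
Proof.
move=> he; apply: span_gen; exists e, zf; split => //; split => //.
by rewrite /Mono [X in _ * X]big1 ?mulr1 // => o _; rewrite expr0.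
Qed.

Lemma reduce (o : Y) (p : {poly C}) E :
  p != 0 -> root p (ys o) -> (forall i, SG E zf p`_i) ->
  forall b, SG (E * b) (delta o (size p).-2) (lead_coef p ^+ b * ys o ^+ b).
Proof.
move=> p0 rt Hp.
set y := ys o; set c := lead_coef p; set d := (size p).-1.
have d1 : (1 <= d)%N.
  rewrite /d; have [le1|] := leqP (size p) 1; last by case: (size p) => [|[|m]].
  move: rt p0; rewrite (size1_polyC le1) /root hornerC => /eqP ->.
  by rewrite eqxx.
have szp : size p = d.+1 by move: d1; rewrite /d; case: (size p).
have Hc : SG E zf c by rewrite /c lead_coefE; apply: Hp.
have rel : c * y ^+ d = - \sum_(i < d) p`_i * y ^+ i.
  apply/eqP; rewrite -addr_eq0 addrC; move: rt; rewrite /root horner_coef szp big_ord_recr /=.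
  by rewrite /c lead_coefE szp.
have Hrel : SG E (delta o d.-1) (c * y ^+ d).
  rewrite rel; apply: spanN; apply: span_sum => i _.
  apply: SG_mono (SG_mul (Hp i) (SG_y 0 (Bf:=delta o d.-1) (o:=o) (l:=i) _)) => //.
    by rewrite addn0.
  by rewrite /delta eqxx -ltnS (prednK d1).
elim=> [|b IH]; first by rewrite !expr0 mulr1; apply: SG_one.
have -> : c ^+ b.+1 * y ^+ b.+1 = (c ^+ b * y ^+ b) * (c * y) by rewrite !exprS; ring.
have Hcy : span (fun g => g = c * y) (c * y) by apply: span_gen.
apply: (span_mul IH Hcy) => g1 g2 [e [bb [he [hb ->]]]] ->.
have hbb : forall o', o' != o -> bb o' = 0%N.
  by move=> o' /negbTE ne; have := hb o'; rewrite /delta ne; case: (bb o').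
have -> : Mono e bb = (\prod_j tp j ^+ e j) * y ^+ bb o.
  rewrite -Mono_delta /Mono; congr (_ * _); apply: eq_bigr => o' _.
  rewrite /delta; case: eqP => [->//|/eqP ne]; by rewrite hbb.
have hl := hb o; rewrite /delta eqxx in hl.
have HT : SG (E * b) zf (\prod_j tp j ^+ e j) by apply: SG_T.
have [lt|eq] := ltnP (bb o) d.-1.
  have -> : (\prod_j tp j ^+ e j) * y ^+ bb o * (c * y) =
      ((\prod_j tp j ^+ e j) * c) * y ^+ (bb o).+1 by rewrite exprS; ring.
  have Hy : SG 0 (delta o d.-1) (y ^+ (bb o).+1) by apply: SG_y; rewrite /delta eqxx.
  apply: SG_mono (SG_mul (SG_mul HT Hc) Hy).
  - by rewrite addn0 mulnS addnC.
  - by move=> o'; rewrite /zf.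
have ebo : bb o = d.-1 by apply/eqP; rewrite eqn_leq hl eq.
have -> : (\prod_j tp j ^+ e j) * y ^+ bb o * (c * y) =
    (\prod_j tp j ^+ e j) * (c * y ^+ d).
  by rewrite ebo -[in RHS](prednK d1) exprS; ring.
by apply: SG_mono (SG_mul HT Hrel) => //; rewrite mulnS addnC.
Qed.


Lemma leq_pow (m n e : nat) : (m <= n)%N -> (m ^ e <= n ^ e)%N.
Proof. by move=> H; elim: e => [|e IH]; rewrite ?expn0 // !expnS leq_mul. Qed.

Definition AlgRel (E D : nat) (y : C) := exists p : {poly C},
  p != 0 /\ root p y /\ (size p <= D.+2)%N /\ forall i, SG E zf p`_i.

Lemma AlgRel_mono E D E' D' y : (E <= E')%N -> (D <= D')%N -> AlgRel E D y -> AlgRel E' D' y.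
Proof.
move=> hE hD [p [p0 [rt [sz Hp]]]]; exists p; split => //; split => //; split.
  by apply: leq_trans sz _; rewrite ltnS ltnS.
by move=> i; apply: SG_mono (Hp i).
Qed.

Lemma unif : (forall o, exists E D, AlgRel E D (ys o)) ->
  exists E D, forall o, AlgRel E D (ys o).
Proof.
move=> H.
have : forall o, exists ED : nat * nat, AlgRel ED.1 ED.2 (ys o).
  by move=> o; have [E [D HED]] := H o; exists (E, D).
move=> /fin_all_exists [F HF].
exists (\max_o (F o).1), (\max_o (F o).2) => o.
apply: AlgRel_mono (HF o).
  exact: (leq_bigmax (F := fun o => (F o).1)).
exact: (leq_bigmax (F := fun o => (F o).2)).
Qed.

Lemma prodclaim E D N : (forall o, AlgRel E D (ys o)) ->
  forall s : seq Y, exists c : C, c != 0 /\ forall b : Y -> nat, (forall o, b o <= N)%N ->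
  SG (size s * (E * N)) (fun _ => size s * D)%N (c * \prod_(o <- s) ys o ^+ b o).
Proof.
move=> HA; elim=> [|o s [c' [c'0 IH]]].
  by exists 1; split; [exact: oner_neq0 | move=> b _; rewrite big_nil mulr1; apply: SG_one].
have [p [p0 [rt [sz Hp]]]] := HA o.
set co := lead_coef p.
have co0 : co != 0 by rewrite lead_coef_eq0.
have Hco : SG E zf co by rewrite /co lead_coefE; apply: Hp.
exists (co ^+ N * c'); split; first by rewrite mulf_neq0 // expf_neq0.
move=> b hb.
have H1 := SG_X (N - b o) Hco.
have H2 := reduce p0 rt Hp (b o).
have H12 := SG_mul H1 H2.
have H := SG_mul H12 (IH b hb).
have -> : co ^+ N * c' * \prod_(o0 <- o :: s) ys o0 ^+ b o0 =
   co ^+ (N - b o) * (lead_coef p ^+ b o * ys o ^+ b o) * (c' * \prod_(o0 <- s) ys o0 ^+ b o0).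
  rewrite big_cons -/co.
  have -> : co ^+ N = co ^+ (N - b o) * co ^+ b o by rewrite -exprD subnK.
  ring.
apply: SG_mono H.
  have := hb o; rewrite /= mulSn; set x := (E * N)%N; set y := size s.
  move=> hbo; rewrite -mulnDr subnK //.
move=> o' /=; rewrite /zf add0n mulSn leq_add2r /delta.
by case: (o' == o) => //; move: sz; case: (size p) => [|[|m]] //=; rewrite !ltnS.
Qed.

Lemma count : (k < #|Y|)%N -> (forall o, exists E D, AlgRel E D (ys o)) ->
  exists N (z : {ffun Y -> 'I_N.+1} -> int), (exists b, z b != 0) /\
    \sum_(b : {ffun Y -> 'I_N.+1}) (\prod_o ys o ^+ b o) *~ z b = 0.
Proof.
move=> kY Halg; have [E [D HED]] := unif Halg.
set nY := #|Y|.
set B := (nY * D)%N.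
set K1 := ((nY * E).+1 ^ k)%N.
set K2 := (B.+1 ^ nY)%N.
set N := (K1 * K2)%N.
set A := (nY * (E * N))%N.
have [c [c0 Hc]] := prodclaim N HED (enum Y).
rewrite -cardE -/nY in Hc.
pose I := {ffun Y -> 'I_N.+1}.
pose J : finType := ({ffun 'I_k -> 'I_A.+1} * {ffun Y -> 'I_B.+1})%type.
pose v (b : I) := c * \prod_o ys o ^+ b o.
pose w (j : J) := Mono (fun i => j.1 i : nat) (fun o => j.2 o : nat).
have Hv : forall b : I, exists lam : J -> rat, v b = \sum_j ratr (lam j) * w j.
  move=> b; apply: (span_fin (M := Gen A (fun _ => B))).
    move=> g [e [bb [he [hb ->]]]].
    exists ([ffun i => inord (e i)], [ffun o => inord (bb o)]).
    rewrite /w /Mono /=; congr (_ * _); apply: eq_bigr => i _; rewrite ffunE inordK //.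
      by rewrite ltnS.
    by rewrite ltnS.
  have hb : forall o, (b o <= N)%N by move=> o; rewrite -ltnS.
  have := Hc (fun o => b o : nat) hb; rewrite big_enum /=.
  have -> : \prod_(i in Y) ys i ^+ b i = \prod_i ys i ^+ b i by apply: eq_bigl => i; rewrite inE.
  by [].
have [lam Hlam] := fin_all_exists Hv.
have card : (#|J| < #|I|)%N.
  rewrite /I /J card_prod !card_ffun !card_ord -/K2.
  have h1 : (A.+1 <= (nY * E).+1 * N.+1)%N by rewrite /A; nia.
  have h2 : (A.+1 ^ k <= K1 * N.+1 ^ k)%N by rewrite /K1 -expnMn; apply: leq_pow.
  apply: (@leq_ltn_trans (K1 * N.+1 ^ k * K2)); first by rewrite leq_mul2r h2 orbT.
  apply: (@leq_trans (N.+1 ^ k.+1)); last by apply: leq_pexp2l.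
  by rewrite mulnAC -/N expnS ltn_mul2r ltnSn expn_gt0.
have [mu [mu0 Hmu]] := LA Hlam card.
have Hmu' : \sum_(b : I) ratr (mu b) * \prod_o ys o ^+ b o = 0.
  have E1 : \sum_b ratr (mu b) * v b = c * \sum_(b : I) ratr (mu b) * \prod_o ys o ^+ b o.
    by rewrite mulr_sumr; apply: eq_bigr => b _; rewrite /v; ring.
  by move: Hmu; rewrite E1 => /eqP; rewrite mulf_eq0 (negbTE c0) => /eqP.
have [z [z0 Hz]] := int_scale mu0 Hmu'.
by exists N, z.
Qed.

End Mono.

Section PartD.
Variable R : realType.
Local Notation C := (R[i]).
Variable k : nat.
Variable tp : 'I_k -> C.
Variable Y : finType.
Variable ys : Y -> C.

Lemma qeval_SG (a : {mpoly rat[k]}) : SG tp ys (msize a) (@zf Y) (qeval tp a).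
Proof.
rewrite /qeval /mmap; apply: span_sum => m ms; apply: spanZ; apply: span_gen.
exists (fun j => m j), (@zf Y); split; last split => //.
  move=> j; apply: ltnW; apply: leq_ltn_trans (msize_mdeg_lt ms).
  by rewrite mdegE (bigD1 j) //= leq_addr.
by rewrite /Mono /mmap1 [X in _ * X]big1 ?mulr1 // => o _; rewrite expr0.
Qed.

Lemma alg_AlgRel y : algebraic_over tp y -> exists E D, AlgRel tp ys E D y.
Proof.
move=> [P [P0 [HQ rt]]].
have den : forall n, exists d : {mpoly rat[k]}, qeval tp d != 0 /\
    forall i, (i < n)%N -> exists a, P`_i * qeval tp d = qeval tp a.
  elim=> [|n [d [d0 Hd]]].
    by exists 1; rewrite /qeval rmorph1 oner_neq0; split.
  have [a [b [b0 Hn]]] := HQ n.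
  exists (d * b); split; first by rewrite /qeval rmorphM mulf_neq0.
  move=> i; rewrite ltnS leq_eqVlt => /orP [/eqP ->|lt].
    exists (a * d); rewrite Hn /qeval !rmorphM; rewrite /qeval in b0; field.
    by rewrite b0.
  have [a' Ha'] := Hd i lt; exists (a' * b).
  by rewrite /qeval !rmorphM mulrA; rewrite /qeval in Ha'; rewrite Ha'.
have [d [d0 Hd]] := den (size P).
set P' := qeval tp d *: P.
have HE : forall n, exists E, forall i, (i < n)%N -> SG tp ys E (@zf Y) P'`_i.
  elim=> [|n [E HE]]; first by exists 0%N.
  have : exists a, P'`_n = qeval tp a.
    have [lt|ge] := ltnP n (size P).
      have [a Ha] := Hd n lt; exists a; by rewrite coefZ mulrC.
    by exists 0; rewrite /qeval rmorph0 coefZ nth_default ?mulr0.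
  move=> [a Ha]; exists (maxn E (msize a)) => i; rewrite ltnS leq_eqVlt => /orP [/eqP ->|lt].
    by rewrite Ha; apply: SG_mono (qeval_SG a) => //; rewrite leq_maxr.
  by apply: SG_mono (HE i lt) => //; rewrite leq_maxl.
have [E HE'] := HE (size P).
exists E, (size P); exists P'; split; first by rewrite scale_poly_eq0 negb_or d0.
split; first by rewrite /root /P' hornerZ (eqP rt) mulr0.
split; first by rewrite size_scale // ltnW.
move=> i; have [lt|ge] := ltnP i (size P); first exact: HE'.
by rewrite nth_default ?size_scale //; apply: span0.
Qed.

End PartD.

Lemma big_option (T0 : Type) (idx : T0) (op : Monoid.com_law idx) (T : finType) (F : option T -> T0) :
  \big[op/idx]_(o : option T) F o = op (F None) (\big[op/idx]_(j : T) F (Some j)).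
Proof.
rewrite -!big_enum /=.
rewrite (perm_big (None :: map Some (enum T))) ?big_cons ?big_map //.
apply: uniq_perm; first exact: enum_uniq.
  rewrite /= map_inj_uniq ?enum_uniq ?andbT; last exact: Some_inj.
  by apply/mapP => -[].
by case => [a|]; rewrite mem_enum inE //= mem_map ?mem_enum //; exact: Some_inj.
Qed.

Section QE.
Variable R : realType. Variable k : nat. Variable t : 'I_k -> R[i].
Lemma qeval_sum (I : Type) (r : seq I) (F : I -> {mpoly rat[k]}) :
  qeval t (\sum_(i <- r) F i) = \sum_(i <- r) qeval t (F i).
Proof. by rewrite /qeval raddf_sum. Qed.
Lemma qevalZ c (p : {mpoly rat[k]}) : qeval t (c *: p) = ratr c * qeval t p.
Proof. by rewrite /qeval mmapZ. Qed.
Lemma qevalX m : qeval t 'X_[m] = \prod_i t i ^+ m i.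
Proof. by rewrite /qeval mmapX. Qed.
Lemma qeval0 : qeval t 0 = 0.
Proof. by rewrite /qeval raddf0. Qed.
Lemma qevalXi (i : 'I_k) : qeval t 'X_i = t i.
Proof. by rewrite /qeval mmapX mmap1U. Qed.
End QE.

Definition ysopt (R : realType) (k : nat) (t : 'I_k -> R[i]) (x : R[i]) (o : option 'I_k) : R[i] :=
  match o with Some j => t j | None => x end.

Lemma build_poly (R : realType) (k : nat) (t : 'I_k -> R[i]) (x : R[i]) (N : nat)
    (z : {ffun option 'I_k -> 'I_N.+1} -> int) :
  alg_indep t -> (exists b, z b != 0) ->
  \sum_(b : {ffun option 'I_k -> 'I_N.+1}) (\prod_o ysopt t x o ^+ b o) *~ z b = 0 ->
  exists p : {poly R[i]}, p != 0 /\
    (forall i, Zspan (fun g => exists e : 'I_k -> nat, g = \prod_i t i ^+ e i) p`_i) /\ root p x.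
Proof.
move=> hind [b0 zb0] Hz.
pose I := {ffun option 'I_k -> 'I_N.+1}.
pose Tt (b : I) := \prod_j t j ^+ b (Some j).
pose p := \sum_(b : I) ((Tt b *~ z b)%:P * 'X^(b None)).
have coef : forall l, p`_l = \sum_(b : I) (if (b None : nat) == l then Tt b *~ z b else 0).
  move=> l; rewrite coef_sum; apply: eq_bigr => b _; rewrite coefCM coefXn eq_sym.
  by case: eqP => _; rewrite ?mulr1 ?mulr0.
exists p; split; last split.
- set l0 := (b0 None : nat).
  suff : p`_l0 != 0 by apply: contraNneq => ->; rewrite coef0.
  pose mnm (b : I) : 'X_{1..k} := [multinom (b (Some j) : nat) | j < k].
  pose Phi := \sum_(b : I) (if (b None : nat) == l0 then (z b)%:~R *: 'X_[mnm b] else 0 : {mpoly rat[k]}).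
  have qPhi : qeval t Phi = p`_l0.
    rewrite coef qeval_sum; apply: eq_bigr => b _; case: eqP => _; last by rewrite qeval0.
    rewrite qevalZ qevalX rmorph_int mulrzl; congr (_ *~ _).
    by rewrite /Tt; apply: eq_bigr => j _; rewrite mnmE.
  have Phi0 : Phi != 0.
    apply/negP => /eqP Phi0; have := congr1 (mcoeff (mnm b0)) Phi0.
    rewrite raddf_sum raddf0 (bigD1 b0) //= eqxx mcoeffZ mcoeffX eqxx mulr1 big1 ?addr0.
      by move/eqP; rewrite intr_eq0 (negbTE zb0).
    move=> b nb; case: eqP => hb; last by rewrite raddf0.
    rewrite mcoeffZ mcoeffX; case: eqP => [hm|_]; last by rewrite mulr0.
    exfalso; move/eqP: nb; apply; apply/ffunP => -[j|]; last by apply/val_inj; rewrite /= hb.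
    have := congr1 (fun m : 'X_{1..k} => m j) hm; rewrite /mnm /= !mnmE.
    by move/val_inj.
  rewrite -qPhi; apply/eqP => /hind; exact/eqP.
- move=> l; exists (map (fun b : I => (z b, Tt b)) (filter (fun b : I => (b None : nat) == l) (enum I))); split.
    move=> q /mapP [b _ ->] /=; by exists (fun j => b (Some j) : nat).
  rewrite coef big_map big_filter /= [RHS]big_mkcond big_enum /=.
  by apply: eq_bigl => b; rewrite inE.
- rewrite /root /p horner_sum; apply/eqP; rewrite -[RHS]Hz; apply: eq_bigr => b _.
  rewrite hornerCM hornerXn big_option /= -/(Tt b) mulrzAl mulrC.
  by [].
Qed.

Unset Implicit Arguments.

Theorem lemma4p1 (R : realType) (S : R[i] -> Prop) (k : nat) (t : 'I_k -> R[i])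
    (f : R[i] -> R[i]) :
  is_subring S ->
  trdeg_eq (frac_field S) k ->
  (forall i, S (t i)) ->
  alg_indep t ->
  (forall x y, S x -> S y -> f (x + y) = f x + f y) ->
  gen_poly_on_units S (fun x => f x / x) ->
  (forall e : 'I_k -> nat, f (\prod_(i < k) t i ^+ e i) = 0) ->
  forall x, S x -> f x = 0.
Proof.
move=> hS htr ht hind hadd [m hm] hG x Sx.
pose G := fun g : R[i] => exists e : 'I_k -> nat, g = \prod_i t i ^+ e i.
have t0 : forall i, t i != 0.
  move=> i; apply/eqP => ti0; have := hind 'X_i; rewrite qevalXi ti0 => /(_ erefl).
  move/(congr1 (mcoeff U_(i))); rewrite mcoeffXU eqxx raddf0 => /eqP.
  by rewrite oner_eq0.
have G1 : G 1 by exists (fun _ => 0%N); rewrite big1 // => i _; rewrite expr0.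
have GM : forall a b, G a -> G b -> G (a * b).
  move=> a b [e ->] [e' ->]; exists (fun j => e j + e' j)%N.
  by rewrite -big_split; apply: eq_bigr => j _; rewrite exprD.
have GS : forall a, G a -> S a.
  by move=> a [e ->]; apply: (Sprod hS) => i; apply: (SX hS); apply: ht.
have G0 : forall a, G a -> a != 0.
  move=> a [e ->]; rewrite prodf_seq_neq0; apply/allP => i _ /=; exact: expf_neq0.
have hG' : forall g, G g -> f g = 0 by move=> g [e ->]; apply: hG.
have Hex : forall y, S y -> exists p : {poly R[i]}, p != 0 /\ (forall i, Zspan G p`_i) /\ root p y.
  move=> y Sy; have [tp [Ktp [indtp algtp]]] := htr.
  pose ys := ysopt t y.
  have Halg : forall o, exists E D, AlgRel tp ys E D (ys o).
    move=> o; apply: alg_AlgRel; apply: algtp.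
    exists (ys o), 1; split; first by case: o => [j|] /=; [exact: ht | exact: Sy].
    by split; [exact: S1 | rewrite oner_neq0 divr1].
  have kY : (k < #|{: option 'I_k}|)%N by rewrite card_option card_ord.
  have [N [z [z0 Hz]]] := count kY Halg.
  exact: build_poly hind z0 Hz.
have HB : forall g, fadd S g -> derivS S g -> (forall a, G a -> g a = 0) ->
    forall y, S y -> g y = 0.
  by move=> g hg der hGg y Sy; apply: (partB hS GS hg der hGg Hex).
exact: (partA hS G1 GM GS G0 HB hadd hm hG' Sx).
Qed.
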